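(* There are absolute constants $\bar c>0$ such that if $c_1,c_2\le\bar c$ (e.g. $c_1=c_2=\frac1{200}$), the concentration conditions (CC) hold at $\mathbf{x}_t$ with constants $c_1,c_2$, $c_3\in[0,1)$, and $\mathbf{\Delta}_t$ satisfies the Case 2 requirement (namely, whenever $\|\mathbf{\Delta}_t^\star\|\ge\frac12\sqrt{\epsilon/\rho}$, $\tilde m_t(\mathbf{\Delta}_t)\le\tilde m_t(\mathbf{\Delta}_t^\star)+\frac{c_3}{12}\rho\|\mathbf{\Delta}_t^\star\|^3$), and $\mathbf{x}_t+\mathbf{\Delta}_t^\star$ is not an $\epsilon$-second-order stationary point of $f$, then $m_t(\mathbf{x}_t+\mathbf{\Delta}_t)-m_t(\mathbf{x}_t)\le-\frac{1-c_3}{96}\sqrt{\epsilon^3/\rho}$.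
   Context: $f:\mathbb{R}^d\to\mathbb{R}$ twice differentiable with $\rho$-Lipschitz Hessian (spectral norm); $\epsilon>0$. $\epsilon$-second-order stationary point: $\|\nabla f(\mathbf{x})\|\le\epsilon$ and $\lambda_{\min}(\nabla^2 f(\mathbf{x}))\ge-\sqrt{\rho\epsilon}$. (CC) at $\mathbf{x}_t$ with constants $c_1,c_2$: vector $\mathbf{g}_t$ and symmetric matrix $\mathbf{B}_t$ with $\|\mathbf{g}_t-\nabla f(\mathbf{x}_t)\|\le c_1\epsilon$ and $\|(\mathbf{B}_t-\nabla^2 f(\mathbf{x}_t))\mathbf{v}\|\le c_2\sqrt{\rho\epsilon}\|\mathbf{v}\|$ for all $\mathbf{v}$. Cubic model: $m_t(\mathbf{y})=f(\mathbf{x}_t)+(\mathbf{y}-\mathbf{x}_t)^\top\mathbf{g}_t+\frac12(\mathbf{y}-\mathbf{x}_t)^\top\mathbf{B}_t(\mathbf{y}-\mathbf{x}_t)+\frac\rho6\|\mathbf{y}-\mathbf{x}_t\|^3$, $\tilde m_t(\mathbf{\Delta})=m_t(\mathbf{x}_t+\mathbf{\Delta})-f(\mathbf{x}_t)$, and $\mathbf{\Delta}_t^\star$ a global minimizer of $\tilde m_t$. *)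

(* Defs.v *)
From mathcomp Require Import ssreflect ssrfun ssrbool eqtype ssrnat seq fintype.
From Stdlib Require Import Reals.
Open Scope R_scope.

Definition vec (d : nat) := 'I_d -> R.
Definition mat (d : nat) := 'I_d -> 'I_d -> R.

Definition vsum {d : nat} (F : 'I_d -> R) : R :=
  foldr Rplus 0 (map F (enum 'I_d)).

Definition vadd {d} (u v : vec d) : vec d := fun i => u i + v i.
Definition vsub {d} (u v : vec d) : vec d := fun i => u i - v i.
Definition vzero {d} : vec d := fun _ => 0.
Definition vscale {d} (a : R) (v : vec d) : vec d := fun i => a * v i.
Definition dot {d} (u v : vec d) : R := vsum (fun i => u i * v i).
Definition vnorm {d} (v : vec d) : R := sqrt (dot v v).

Definition mv {d} (A : mat d) (v : vec d) : vec d :=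
  fun i => vsum (fun j => A i j * v j).
Definition msub {d} (A B : mat d) : mat d := fun i j => A i j - B i j.
Definition mx_symmetric {d} (A : mat d) : Prop := forall i j, A i j = A j i.
Definition quad {d} (A : mat d) (v : vec d) : R := dot v (mv A v).

(* Fréchet derivatives: g is the gradient of f, H is the derivative of g
   (i.e. the Hessian of f). *)
Definition is_gradient {d} (f : vec d -> R) (g : vec d -> vec d) : Prop :=
  forall x eps, 0 < eps -> exists delta, 0 < delta /\
    forall h : vec d, vnorm h < delta ->
      Rabs (f (vadd x h) - f x - dot (g x) h) <= eps * vnorm h.

Definition is_jacobian {d} (g : vec d -> vec d) (H : vec d -> mat d) : Prop :=
  forall x eps, 0 < eps -> exists delta, 0 < delta /\
    forall h : vec d, vnorm h < delta ->
      vnorm (vsub (vsub (g (vadd x h)) (g x)) (mv (H x) h)) <= eps * vnorm h.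

(* ||A||_spectral <= L, unfolded: ||A v|| <= L ||v|| for all v. *)
Definition spec_norm_le {d} (A : mat d) (L : R) : Prop :=
  forall v : vec d, vnorm (mv A v) <= L * vnorm v.

Definition hess_lipschitz {d} (H : vec d -> mat d) (rho : R) : Prop :=
  forall x y : vec d, spec_norm_le (msub (H x) (H y)) (rho * vnorm (vsub x y)).

Definition is_eigenvalue {d} (A : mat d) (l : R) : Prop :=
  exists v : vec d, v <> vzero /\ mv A v = vscale l v.
Definition lambda_min_ge {d} (A : mat d) (a : R) : Prop :=
  forall l, is_eigenvalue A l -> a <= l.

Definition is_eps_SOSP {d} (g : vec d -> vec d) (H : vec d -> mat d)
  (rho eps : R) (x : vec d) : Prop :=
  vnorm (g x) <= eps /\ lambda_min_ge (H x) (- sqrt (rho * eps)).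

Definition CC {d} (g : vec d -> vec d) (H : vec d -> mat d) (rho eps c1 c2 : R)
  (x gt : vec d) (Bt : mat d) : Prop :=
  vnorm (vsub gt (g x)) <= c1 * eps /\
  forall v : vec d, vnorm (mv (msub Bt (H x)) v) <= c2 * sqrt (rho * eps) * vnorm v.

Definition cubic_model {d} (f : vec d -> R) (rho : R) (x gt : vec d) (Bt : mat d)
  (y : vec d) : R :=
  let s := vsub y x in
  f x + dot s gt + / 2 * quad Bt s + rho / 6 * vnorm s ^ 3.

Definition cubic_model_shift {d} (f : vec d -> R) (rho : R) (x gt : vec d)
  (Bt : mat d) (D : vec d) : R :=
  cubic_model f rho x gt Bt (vadd x D) - f x.

(* Main.v *)
Require Import Defs.
From mathcomp Require Import ssreflect ssrfun ssrbool eqtype ssrnat seq fintype.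
From Stdlib Require Import Reals Lra Psatz FunctionalExtensionality.
Open Scope R_scope.

Section Sums.
Context {d : nat}.

Definition lsum (F : 'I_d -> R) (s : seq 'I_d) := foldr Rplus 0 (map F s).
Lemma lsum_nil F : lsum F [::] = 0. Proof. by []. Qed.
Lemma lsum_cons F a s : lsum F (a :: s) = F a + lsum F s. Proof. by []. Qed.

Lemma lsum_add F G s : lsum (fun i => F i + G i) s = lsum F s + lsum G s.
Proof. elim: s => [|a s IH]; rewrite ?lsum_nil ?lsum_cons; [lra|rewrite IH; lra]. Qed.
Lemma lsum_scale a F s : lsum (fun i => a * F i) s = a * lsum F s.
Proof. elim: s => [|b s IH]; rewrite ?lsum_nil ?lsum_cons; [lra|rewrite IH; lra]. Qed.
Lemma lsum_ext F G s : (forall i, F i = G i) -> lsum F s = lsum G s.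
Proof. move=> E; elim: s => [|b s IH]; rewrite ?lsum_nil ?lsum_cons; [lra|rewrite IH E; lra]. Qed.
Lemma lsum_ge0 F s : (forall i, 0 <= F i) -> 0 <= lsum F s.
Proof. move=> E; elim: s => [|b s IH]; rewrite ?lsum_nil ?lsum_cons; [lra| specialize (E b); lra]. Qed.
Lemma lsum_mem F s i : (forall i, 0 <= F i) -> i \in s -> F i <= lsum F s.
Proof. move=> E; elim: s => [|b s IH] //=; rewrite in_cons lsum_cons; case/orP.
  - move/eqP=> ->. have := lsum_ge0 F s E. lra.
  - move=> /IH; specialize (E b); lra. Qed.
Lemma lsum_swap (F : 'I_d -> 'I_d -> R) s t :
  lsum (fun i => lsum (fun j => F i j) t) s = lsum (fun j => lsum (fun i => F i j) s) t.
Proof.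
elim: s => [|a s IH].
- rewrite lsum_nil. elim: t => [|b t IHt]; rewrite ?lsum_nil ?lsum_cons //. rewrite -IHt lsum_nil; lra.
- rewrite lsum_cons IH -lsum_add. apply lsum_ext => j. rewrite lsum_cons. lra.
Qed.
End Sums.

Lemma vsum_add {d} (F G : 'I_d -> R) : vsum (fun i => F i + G i) = vsum F + vsum G.
Proof. exact: lsum_add. Qed.
Lemma vsum_scale {d} a (F : 'I_d -> R) : vsum (fun i => a * F i) = a * vsum F.
Proof. exact: lsum_scale. Qed.
Lemma vsum_ext {d} (F G : 'I_d -> R) : (forall i, F i = G i) -> vsum F = vsum G.
Proof. exact: lsum_ext. Qed.
Lemma vsum_ge0 {d} (F : 'I_d -> R) : (forall i, 0 <= F i) -> 0 <= vsum F.
Proof. exact: lsum_ge0. Qed.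
Lemma vsum_mem {d} (F : 'I_d -> R) i : (forall i, 0 <= F i) -> F i <= vsum F.
Proof. move=> E; apply: lsum_mem => //; by rewrite mem_enum. Qed.
Lemma vsum_swap {d} (F : 'I_d -> 'I_d -> R) :
  vsum (fun i => vsum (fun j => F i j)) = vsum (fun j => vsum (fun i => F i j)).
Proof. exact: lsum_swap. Qed.
Lemma vsum_opp {d} (F : 'I_d -> R) : vsum (fun i => - F i) = - vsum F.
Proof. rewrite -(vsum_ext (fun i => -1 * F i)); [rewrite vsum_scale; ring| move=> i; ring]. Qed.
Lemma vsum_sub {d} (F G : 'I_d -> R) : vsum (fun i => F i - G i) = vsum F - vsum G.
Proof. rewrite (vsum_ext _ (fun i => F i + - G i)) ?vsum_add ?vsum_opp; [ring| move=> i; ring]. Qed.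

Section Vec.
Context {d : nat}.
Implicit Types u v w : vec d.

Lemma dot_comm u v : dot u v = dot v u.
Proof. apply vsum_ext => i; ring. Qed.
Lemma dot_addr u v w : dot u (vadd v w) = dot u v + dot u w.
Proof. rewrite /dot -vsum_add; apply vsum_ext => i; rewrite /vadd; ring. Qed.
Lemma dot_addl u v w : dot (vadd v w) u = dot v u + dot w u.
Proof. rewrite /dot -vsum_add; apply vsum_ext => i; rewrite /vadd; ring. Qed.
Lemma dot_subr u v w : dot u (vsub v w) = dot u v - dot u w.
Proof. rewrite /dot -vsum_sub; apply vsum_ext => i; rewrite /vsub; ring. Qed.
Lemma dot_subl u v w : dot (vsub v w) u = dot v u - dot w u.
Proof. rewrite /dot -vsum_sub; apply vsum_ext => i; rewrite /vsub; ring. Qed.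
Lemma dot_scaler a u v : dot u (vscale a v) = a * dot u v.
Proof. rewrite /dot -vsum_scale; apply vsum_ext => i; rewrite /vscale; ring. Qed.
Lemma dot_scalel a u v : dot (vscale a u) v = a * dot u v.
Proof. rewrite /dot -vsum_scale; apply vsum_ext => i; rewrite /vscale; ring. Qed.
Lemma dot_ge0 u : 0 <= dot u u.
Proof. apply vsum_ge0 => i; nra. Qed.
Lemma dot_zero0 u : dot u u = 0 -> u = vzero.
Proof. move=> H; apply functional_extensionality => i.
  have := vsum_mem (fun i => u i * u i) i (fun i => ltac:(nra)).
  rewrite -/(dot u u) H /vzero => ?. nra. Qed.
Lemma dot_vzero u : dot u vzero = 0.
Proof. rewrite /dot (vsum_ext _ (fun i => 0 * u i)); first by rewrite vsum_scale; ring.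
  move=> i; rewrite /vzero; ring. Qed.

Lemma vnorm_ge0 u : 0 <= vnorm u. Proof. apply sqrt_pos. Qed.
Lemma vnorm_sq u : vnorm u * vnorm u = dot u u.
Proof. apply sqrt_sqrt, dot_ge0. Qed.

Lemma CS2 u v : dot u v * dot u v <= dot u u * dot v v.
Proof.
have Q : forall t, 0 <= dot u u - 2 * t * dot u v + t * t * dot v v.
{ move=> t. have := dot_ge0 (vsub u (vscale t v)).
  rewrite !dot_subl !dot_subr !dot_scalel !dot_scaler (dot_comm v u). lra. }
have hu := dot_ge0 u; have hv := dot_ge0 v.
destruct (Req_dec (dot v v) 0) as [E|E].
- destruct (Req_dec (dot u v) 0) as [E2|E2]; [rewrite E2; nra|].
  have := Q ((dot u u + 1) / (2 * dot u v)). rewrite E.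
  have -> : 2 * ((dot u u + 1) / (2 * dot u v)) * dot u v = dot u u + 1 by field.
  lra.
- have := Q (dot u v / dot v v).
  have -> : dot u v / dot v v * (dot u v / dot v v) * dot v v = dot u v * dot u v / dot v v by field.
  move=> h. have hv' : 0 < dot v v by lra.
  have : dot u v * dot u v / dot v v <= dot u u by lra.
  move=> h2. apply Rmult_le_reg_r with (/ dot v v). by apply Rinv_0_lt_compat.
  have -> : dot u u * dot v v * / dot v v = dot u u by field.
  lra.
Qed.

Lemma CS u v : Rabs (dot u v) <= vnorm u * vnorm v.
Proof.
have h1 := vnorm_ge0 u; have h2 := vnorm_ge0 v.
apply Rsqr_incr_0_var; last by nra.
rewrite -Rsqr_abs /Rsqr. have := CS2 u v. rewrite -!vnorm_sq. nra.
Qed.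
Lemma CS' u v : dot u v <= vnorm u * vnorm v.
Proof. have := CS u v. have := Rle_abs (dot u v). lra. Qed.

Lemma vnorm_add u v : vnorm (vadd u v) <= vnorm u + vnorm v.
Proof.
have h1 := vnorm_ge0 u; have h2 := vnorm_ge0 v; have h3 := vnorm_ge0 (vadd u v).
apply Rsqr_incr_0_var; last by nra.
rewrite /Rsqr vnorm_sq !dot_addl !dot_addr (dot_comm v u).
have := CS' u v. have := vnorm_sq u. have := vnorm_sq v. nra.
Qed.
Lemma vnorm_scale a u : vnorm (vscale a u) = Rabs a * vnorm u.
Proof.
rewrite /vnorm dot_scalel dot_scaler -Rmult_assoc sqrt_mult_alt.
- by rewrite -sqrt_Rsqr_abs.
- nra.
Qed.
Lemma vnorm_eq0 u : vnorm u = 0 -> u = vzero.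
Proof. move=> h; apply dot_zero0; rewrite -vnorm_sq h; ring. Qed.
Lemma vnorm_vzero : vnorm (@vzero d) = 0.
Proof. rewrite /vnorm dot_vzero sqrt_0 //. Qed.

Lemma mv_add (A : mat d) u v : mv A (vadd u v) = vadd (mv A u) (mv A v).
Proof. apply functional_extensionality => i; rewrite /mv /vadd -vsum_add; apply vsum_ext => j; ring. Qed.
Lemma mv_scale (A : mat d) a u : mv A (vscale a u) = vscale a (mv A u).
Proof. apply functional_extensionality => i; rewrite /mv /vscale -vsum_scale; apply vsum_ext => j; ring. Qed.
Lemma mv_msub (A B : mat d) u : mv (msub A B) u = vsub (mv A u) (mv B u).
Proof. apply functional_extensionality => i; rewrite /mv /vsub -vsum_sub; apply vsum_ext => j; rewrite /msub; ring. Qed.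
Lemma dot_mv_sym (A : mat d) u v : mx_symmetric A -> dot u (mv A v) = dot v (mv A u).
Proof.
move=> S. rewrite /dot /mv.
rewrite (vsum_ext (fun i => u i * vsum (fun j => A i j * v j)) (fun i => vsum (fun j => u i * A i j * v j))); last first.
{ move=> i; rewrite -vsum_scale; apply vsum_ext => j; ring. }
rewrite vsum_swap. apply vsum_ext => j. rewrite -vsum_scale; apply vsum_ext => i. rewrite S; ring.
Qed.
End Vec.

Lemma real_first (a K : R) : (forall s, Rabs s <= 1 -> 0 <= s * a + s * s * K) -> a = 0.
Proof.
move=> H. destruct (Req_dec a 0) as [|Ha]; first done. exfalso.
set M := Rabs K + Rabs a + 1.
have hM : 1 <= M by have := Rabs_pos K; have := Rabs_pos a; rewrite /M; lra.
have hs : Rabs (- a / M) <= 1.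
{ have hi : M * / M = 1 by field; lra.
  have hi2 : 0 < / M by apply Rinv_0_lt_compat; lra.
  have h1 := Rle_abs a. have h2 := Rle_abs (- a). rewrite Rabs_Ropp in h2.
  have h3 := Rabs_pos K.
  have hMa : Rabs a <= M - 1 by rewrite /M; lra.
  apply Rabs_le. rewrite /Rdiv. clearbody M. split; nra. }
have := H _ hs.
have -> : - a / M * a + - a / M * (- a / M) * K = (a * a / M) * (K / M - 1) by field; lra.
have ha2 : 0 < a * a / M. { apply Rdiv_lt_0_compat; [nra|lra]. }
have : K / M - 1 < 0.
{ have : K / M < 1; last lra. apply Rmult_lt_reg_r with M; first lra. field_simplify; last lra.
  have := Rle_abs K. rewrite /M. have := Rabs_pos a. have : 0 < Rabs a by apply Rabs_pos_lt. lra. }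
nra.
Qed.

Lemma real_second (c k : R) : 0 <= k -> (forall s, 0 < s <= 1 -> 0 <= c + s * k) -> 0 <= c.
Proof.
move=> hk H. destruct (Rle_lt_dec 0 c) as [|hc]; first done. exfalso.
have hs : 0 < - c / (k - c) <= 1.
{ split. apply Rdiv_lt_0_compat; lra. apply Rmult_le_reg_r with (k - c); first lra. field_simplify; lra. }
have := H _ hs.
have -> : c + - c / (k - c) * k = - (c * c) / (k - c) by field; lra.
have : 0 < c * c / (k - c) by apply Rdiv_lt_0_compat; nra.
lra.
Qed.

Section Model.
Context {d : nat}.
Variables (f : vec d -> R) (rho : R) (x gt : vec d) (B : mat d).
Hypothesis Bsym : mx_symmetric B.
Let mt := cubic_model_shift f rho x gt B.

Lemma mt_eq Y : mt Y = dot Y gt + / 2 * quad B Y + rho / 6 * vnorm Y ^ 3.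
Proof.
rewrite /mt /cubic_model_shift /cubic_model /=.
have -> : vsub (vadd x Y) x = Y by apply functional_extensionality => i; rewrite /vsub /vadd; ring.
ring.
Qed.

Lemma mt_expand (D u : vec d) s :
  mt (vadd D (vscale s u)) = mt D + s * dot u gt + s * dot u (mv B D) + s * s / 2 * quad B u
    + rho / 6 * (vnorm (vadd D (vscale s u)) ^ 3 - vnorm D ^ 3).
Proof.
rewrite !mt_eq /quad !dot_addl !mv_add !dot_addr !mv_scale !dot_scalel !dot_scaler.
rewrite (dot_comm D gt) (dot_comm u gt) (dot_mv_sym B D u Bsym).
field.
Qed.

Lemma norm_expand (D u : vec d) s :
  vnorm (vadd D (vscale s u)) * vnorm (vadd D (vscale s u)) =
  vnorm D * vnorm D + 2 * s * dot D u + s * s * dot u u.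
Proof.
rewrite !vnorm_sq !dot_addl !dot_addr !dot_scalel !dot_scaler (dot_comm u D). ring.
Qed.

Lemma norm_diff (D u : vec d) s :
  (vnorm (vadd D (vscale s u)) - vnorm D) ^ 2 <= s * s * dot u u.
Proof.
have E := norm_expand D u s.
have C := CS' D (vadd D (vscale s u)).
rewrite dot_addr dot_scaler -vnorm_sq in C.
nra.
Qed.
End Model.

Lemma cube_id N r s p w : N*N = r*r + 2*s*p + s*s*w ->
  N^3 - r^3 - 3*r*s*p = (N-r)^2*(N + r/2) + 3/2*r*(s*s*w).
Proof. move=> E. have -> : s*s*w = N*N - r*r - 2*s*p by lra. field. Qed.

Lemma cube_bound N r s p w : 0 <= N -> 0 <= r -> N*N = r*r + 2*s*p + s*s*w ->
  (N-r)^2 <= s*s*w -> N^3 - r^3 - 3*r*s*p <= s*s*w*(N + 2*r).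
Proof.
move=> h1 h2 E F. rewrite (cube_id _ _ _ _ _ E).
have : (N-r)^2*(N + r/2) <= s*s*w*(N + r/2) by apply Rmult_le_compat_r; lra.
lra.
Qed.

Lemma sqrt_bound N r a sw : 0 <= sw -> (N - r)^2 <= a * a * (sw * sw) -> 0 <= a -> N - r <= a * sw.
Proof. move=> h1 h2 h3. have h4 : 0 <= a * sw by nra. nra. Qed.

Section Opt.
Variables (d : nat) (f : vec d -> R) (rho : R) (x gt : vec d) (B : mat d) (D : vec d).
Hypothesis Bsym : mx_symmetric B.
Hypothesis rho_pos : 0 < rho.
Hypothesis Hmin : forall Y, cubic_model_shift f rho x gt B D <= cubic_model_shift f rho x gt B Y.

Lemma first_order (u : vec d) : dot u gt + dot u (mv B D) + rho / 2 * vnorm D * dot D u = 0.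
Proof.
set w := dot u u. set sw := sqrt w.
have hw : 0 <= w := dot_ge0 u.
have hsw : 0 <= sw := sqrt_pos w.
have hsw2 : sw * sw = w := sqrt_sqrt w hw.
apply real_first with (K := Rabs (quad B u) / 2 + rho / 6 * w * (3 * vnorm D + sw)).
move=> s hs.
have := Hmin (vadd D (vscale s u)). rewrite (mt_expand f rho x gt B Bsym).
have E := norm_expand D u s. have F := norm_diff D u s.
set N := vnorm (vadd D (vscale s u)) in E F *. set r := vnorm D in E F *.
rewrite -/w in E F.
have hN : 0 <= N := vnorm_ge0 _. have hr : 0 <= r := vnorm_ge0 _.
have CB := cube_bound _ _ _ _ _ hN hr E F.
have ss : s * s <= 1. { have := Rabs_pos s. have e : s*s = Rabs s * Rabs s := Rsqr_abs s. nra. }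
have hN2 : N - r <= 1 * sw. { apply sqrt_bound. all: try lra. rewrite hsw2. nra. }
have q1 : s * s / 2 * quad B u <= s * s * (Rabs (quad B u) / 2).
{ have := Rle_abs (quad B u). have : 0 <= s * s by nra. nra. }
have q2 : s*s*w*(N + 2*r) <= s*s*(w*(3*r+sw)).
{ have : 0 <= s*s*w by nra. nra. }
have q3 : rho/6*(N^3 - r^3 - 3*r*s*dot D u) <= rho/6*(s*s*(w*(3*r+sw))).
{ apply Rmult_le_compat_l; lra. }
move=> H0.
have -> : s * (dot u gt + dot u (mv B D) + rho / 2 * r * dot D u) +
  s * s * (Rabs (quad B u) / 2 + rho / 6 * w * (3 * r + sw)) =
  s * dot u gt + s * dot u (mv B D) + rho / 6 * (3 * r * s * dot D u) + s * s * (Rabs (quad B u) / 2) + rho/6*(s*s*(w*(3*r+sw))) by field.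
have H1 : rho/6*(N^3-r^3) = rho/6*(N^3-r^3-3*r*s*dot D u) + rho/6*(3*r*s*dot D u) by ring.
rewrite H1 in H0.
move: q1 q3 H0.
set T1 := rho/6*(N^3-r^3-3*r*s*dot D u). set T2 := rho / 6 * (s * s * (w * (3 * r + sw))).
set T3 := s * s / 2 * quad B u. set T4 := s * s * (Rabs (quad B u) / 2).
set T5 := rho / 6 * (3 * r * s * dot D u).
move=> *. lra.
Qed.

Lemma second_order (u : vec d) : 0 <= quad B u + rho / 2 * vnorm D * dot u u.
Proof.
have FO := first_order u.
have hw : 0 <= dot u u := dot_ge0 u.
have hr : 0 <= vnorm D := vnorm_ge0 D.
have C2 := CS2 D u. rewrite -(vnorm_sq D) in C2.
destruct (Req_dec (dot D u) 0) as [Hp|Hp].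
- set sw := sqrt (dot u u).
  have hsw : 0 <= sw := sqrt_pos _. have hsw2 : sw * sw = dot u u := sqrt_sqrt _ hw.
  suff : 0 <= (quad B u / 2 + rho / 4 * vnorm D * dot u u) by lra.
  apply real_second with (k := rho / 6 * sw * dot u u); first by
    apply Rmult_le_pos; [apply Rmult_le_pos|]; lra.
  move=> s hs.
  have := Hmin (vadd D (vscale s u)). rewrite (mt_expand f rho x gt B Bsym).
  have E := norm_expand D u s. have F := norm_diff D u s.
  have CI := cube_id _ _ _ _ _ E.
  set N := vnorm (vadd D (vscale s u)) in E F CI *. set r := vnorm D in E F CI hr C2 FO *.
  rewrite Hp in E CI FO.
  have hN : 0 <= N := vnorm_ge0 _.
  have hNr : r <= N by nra.
  have hN2 : N - r <= s * sw. { apply sqrt_bound; try lra. rewrite hsw2. nra. }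
  have K1 : (N - r)^2 * (N + r/2) <= (N - r) * (s * s * dot u u).
  { have -> : (N - r) * (s * s * dot u u) = (N-r)^2 * (N + r) by rewrite /= ; nra.
    apply Rmult_le_compat_l; nra. }
  have K2 : (N - r) * (s * s * dot u u) <= s * sw * (s * s * dot u u).
  { apply Rmult_le_compat_r; nra. }
  have K3 : N^3 - r^3 <= s * sw * (s * s * dot u u) + 3/2 * r * (s * s * dot u u).
  { move: CI. rewrite Rmult_0_r. lra. }
  have K4 : rho / 6 * (N^3 - r^3) <= rho / 6 * (s * sw * (s * s * dot u u) + 3/2 * r * (s * s * dot u u)).
  { apply Rmult_le_compat_l; lra. }
  move=> H0.
  have H2 : 0 <= s * s * (quad B u / 2 + rho / 4 * r * dot u u + s * (rho / 6 * sw * dot u u)).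
  { have -> : s * s * (quad B u / 2 + rho / 4 * r * dot u u + s * (rho / 6 * sw * dot u u)) =
      s * (dot u gt + dot u (mv B D) + rho / 2 * r * 0) + s * s / 2 * quad B u +
      rho / 6 * (s * sw * (s * s * dot u u) + 3/2 * r * (s * s * dot u u)) by rewrite FO; field.
    rewrite -FO. move: H0 K4. set T := rho / 6 * (N ^ 3 - r ^ 3). set T' := rho / 6 * _.
    move=> *. nra. }
  have hs2 : 0 < s * s by nra.
  nra.
- have hw' : 0 < dot u u.
  { destruct (Rle_lt_or_eq_dec _ _ hw) as [|e]; first done. rewrite -e in C2.
    exfalso; apply Hp; nra. }
  set s := -2 * dot D u / dot u u.
  have := Hmin (vadd D (vscale s u)). rewrite (mt_expand f rho x gt B Bsym).
  have E := norm_expand D u s.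
  set N := vnorm (vadd D (vscale s u)) in E *. set r := vnorm D in E hr C2 FO *.
  have hN : 0 <= N := vnorm_ge0 _.
  have E2 : N * N = r * r by rewrite E /s; field; lra.
  have hNr : N = r by nra.
  rewrite hNr.
  have hsp : s * dot D u = - 2 * (dot D u * dot D u) / dot u u by rewrite /s; field; lra.
  have hsw : s * s * dot u u = 4 * (dot D u * dot D u) / dot u u by rewrite /s; field; lra.
  have hs : s <> 0 by rewrite /s; apply Rmult_integral_contrapositive; split; [nra|apply Rinv_neq_0_compat; lra].
  have hs2 : 0 < s * s by nra.
  move=> H0.
  have H2 : 0 <= s * s * (quad B u + rho / 2 * r * dot u u).
  { have -> : s * s * (quad B u + rho / 2 * r * dot u u) =
       2 * (s * dot u gt + s * dot u (mv B D) + s * s / 2 * quad B u + rho / 6 * (r ^ 3 - r ^ 3)).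
    { have e1 : s * dot u gt + s * dot u (mv B D) = - (rho / 2 * r * (s * dot D u)) by
        have := FO; move=> h; nra.
      rewrite e1 hsp.
      have -> : s * s * (quad B u + rho / 2 * r * dot u u) = s * s * quad B u + rho / 2 * r * (s * s * dot u u) by ring.
      rewrite hsw. field. lra. }
    lra. }
  nra.
Qed.

Lemma model_value : cubic_model_shift f rho x gt B D <= - (rho / 12) * vnorm D ^ 3.
Proof.
have FO := first_order D.
have := Hmin (vadd D (vscale (-2) D)). rewrite (mt_expand f rho x gt B Bsym).
have E := norm_expand D D (-2).
set N := vnorm (vadd D (vscale (-2) D)) in E *.
have hN : 0 <= N := vnorm_ge0 _. have hr : 0 <= vnorm D := vnorm_ge0 _.
rewrite -(vnorm_sq D) in E FO.
have hNr : N = vnorm D by nra.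
rewrite hNr mt_eq /quad. move=> H0.
have e3 : vnorm D ^ 3 = vnorm D * (vnorm D * vnorm D) by ring. rewrite e3 in H0 *. lra.
Qed.
End Opt.

Lemma deriv_line {d} (g : vec d -> vec d) (H : vec d -> mat d) (Hj : is_jacobian g H)
  (V x D : vec d) (K c : R) :
  derivable_pt_lim (fun t => dot V (g (vadd x (vscale t D))) - t * K) c
    (dot V (mv (H (vadd x (vscale c D))) D) - K).
Proof.
move=> eps heps.
set y := vadd x (vscale c D).
have hnv := vnorm_ge0 V; have hnd := vnorm_ge0 D.
set nv := vnorm V in hnv *. set nd := vnorm D in hnd *.
have he' : 0 < eps / (2 * (nv + 1) * (nd + 1)).
{ apply Rdiv_lt_0_compat; first lra. apply Rmult_lt_0_compat; [apply Rmult_lt_0_compat|]; lra. }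
have [delta0 [hd0 Hd]] := Hj y _ he'.
have hdel : 0 < delta0 / (nd + 1) by apply Rdiv_lt_0_compat; lra.
exists (mkposreal _ hdel) => h hh0 /= hh.
have Ey : vadd x (vscale (c + h) D) = vadd y (vscale h D).
{ apply functional_extensionality => i; rewrite /y /vadd /vscale; ring. }
rewrite Ey.
have hah : 0 < Rabs h := Rabs_pos_lt _ hh0.
have hn : vnorm (vscale h D) < delta0.
{ rewrite vnorm_scale -/nd.
  have : Rabs h * (nd + 1) < delta0.
  { apply Rmult_lt_reg_r with (/ (nd + 1)). apply Rinv_0_lt_compat; lra.
    have -> : Rabs h * (nd + 1) * / (nd + 1) = Rabs h by field; lra. exact hh. }
  nra. }
have W := Hd _ hn.
set Wv := vsub (vsub (g (vadd y (vscale h D))) (g y)) (mv (H y) (vscale h D)) in W.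
have eq1 : dot V Wv = dot V (g (vadd y (vscale h D))) - dot V (g y) - h * dot V (mv (H y) D).
{ rewrite /Wv !dot_subr mv_scale dot_scaler //. }
have -> : (dot V (g (vadd y (vscale h D))) - (c + h) * K - (dot V (g y) - c * K)) / h -
   (dot V (mv (H y) D) - K) = dot V Wv / h by rewrite eq1; field.
have CSW := CS V Wv. rewrite -/nv in CSW.
rewrite vnorm_scale -/nd in W.
rewrite /Rdiv Rabs_mult Rabs_inv.
have hb : Rabs (dot V Wv) <= nv * (eps / (2 * (nv + 1) * (nd + 1)) * (Rabs h * nd)).
{ apply Rle_trans with (nv * vnorm Wv); first done. apply Rmult_le_compat_l; lra. }
apply Rmult_lt_reg_r with (Rabs h); first done.
have -> : Rabs (dot V Wv) * / Rabs h * Rabs h = Rabs (dot V Wv) by field; lra.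
apply Rle_lt_trans with (1 := hb).
have -> : nv * (eps / (2 * (nv + 1) * (nd + 1)) * (Rabs h * nd)) =
  eps * Rabs h * ((nv / (nv + 1)) * (nd / (nd + 1)) / 2) by field; lra.
have h1 : nv / (nv + 1) < 1. { apply Rmult_lt_reg_r with (nv + 1); first lra. field_simplify; lra. }
have h2 : nd / (nd + 1) < 1. { apply Rmult_lt_reg_r with (nd + 1); first lra. field_simplify; lra. }
have h3 : 0 <= nv / (nv + 1) by apply Rmult_le_pos; [lra| left; apply Rinv_0_lt_compat; lra].
have h4 : 0 <= nd / (nd + 1) by apply Rmult_le_pos; [lra| left; apply Rinv_0_lt_compat; lra].
have : nv / (nv + 1) * (nd / (nd + 1)) / 2 < 1 by nra.
have : 0 < eps * Rabs h by nra.
nra.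
Qed.

Lemma taylor_g {d} (g : vec d -> vec d) (H : vec d -> mat d) (rho : R) (Hj : is_jacobian g H)
  (HL : hess_lipschitz H rho) (hrho : 0 < rho) (x D : vec d) :
  vnorm (vsub (vsub (g (vadd x D)) (g x)) (mv (H x) D)) <= rho * vnorm D * vnorm D.
Proof.
set V := vsub (vsub (g (vadd x D)) (g x)) (mv (H x) D).
set K := dot V (mv (H x) D).
have [xi [Exi hxi]] := MVT_cor2 (fun t => dot V (g (vadd x (vscale t D))) - t * K)
   (fun c => dot V (mv (H (vadd x (vscale c D))) D) - K) 0 1 Rlt_0_1
   (fun c _ => deriv_line g H Hj V x D K c).
have e1 : vadd x (vscale 1 D) = vadd x D by apply functional_extensionality => i; rewrite /vadd /vscale; ring.
have e0 : vadd x (vscale 0 D) = x by apply functional_extensionality => i; rewrite /vadd /vscale; ring.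
rewrite e1 e0 in Exi.
have eV : dot V V = dot V (g (vadd x D)) - dot V (g x) - K by rewrite {2}/V !dot_subr.
set y := vadd x (vscale xi D) in Exi.
have eM : dot V (mv (H y) D) - K = dot V (mv (msub (H y) (H x)) D) by rewrite mv_msub dot_subr.
have B1 := CS' V (mv (msub (H y) (H x)) D).
have B2 := HL y x D.
have ey : vsub y x = vscale xi D by apply functional_extensionality => i; rewrite /y /vsub /vadd /vscale; ring.
rewrite ey vnorm_scale Rabs_right in B2; last lra.
have hnv := vnorm_ge0 V; have hnd := vnorm_ge0 D.
have hvv := vnorm_sq V.
have B3 : vnorm V * vnorm (mv (msub (H y) (H x)) D) <= vnorm V * (rho * (xi * vnorm D) * vnorm D).
{ apply Rmult_le_compat_l; lra. }
have B4 : rho * (xi * vnorm D) * vnorm D <= rho * vnorm D * vnorm D.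
{ have : 0 <= rho * vnorm D * vnorm D by apply Rmult_le_pos; [apply Rmult_le_pos|]; lra. nra. }
have B5 : vnorm V * vnorm V <= vnorm V * (rho * vnorm D * vnorm D).
{ rewrite hvv eV. have := Rmult_le_compat_l _ _ _ hnv B4. nra. }
destruct (Rle_lt_or_eq_dec _ _ hnv) as [hp|hz].
- apply Rmult_le_reg_l with (vnorm V); first done. lra.
- rewrite -hz. apply Rmult_le_pos; [apply Rmult_le_pos|]; lra.
Qed.

Lemma vnorm_opp {d} (a b : vec d) : vnorm (vsub a b) = vnorm (vsub b a).
Proof.
have -> : vsub a b = vscale (-1) (vsub b a) by apply functional_extensionality => i; rewrite /vsub /vscale; ring.
rewrite vnorm_scale Rabs_Ropp Rabs_R1; ring.
Qed.

Lemma dot_lower {d} (u v : vec d) : - (vnorm u * vnorm v) <= dot u v.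
Proof. have := CS u v. have := Rle_abs (- dot u v). rewrite Rabs_Ropp. lra. Qed.

Lemma sqrt_facts (rho eps : R) : 0 < rho -> 0 < eps ->
  sqrt (eps / rho) * sqrt (rho * eps) = eps /\ rho * sqrt (eps / rho) = sqrt (rho * eps)
  /\ sqrt (eps ^ 3 / rho) = eps * sqrt (eps / rho).
Proof.
move=> hr he.
have h1 : 0 <= eps / rho by apply Rlt_le, Rdiv_lt_0_compat.
split; [|split].
- rewrite -sqrt_mult; [|done|nra].
  have -> : eps / rho * (rho * eps) = eps * eps by field; lra.
  apply sqrt_square; lra.
- have -> : rho * eps = (rho * rho) * (eps / rho) by field; lra.
  rewrite sqrt_mult; [|nra|done]. rewrite sqrt_square; lra.
- have -> : eps ^ 3 / rho = (eps * eps) * (eps / rho) by field; lra.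
  rewrite sqrt_mult; [|nra|done]. rewrite sqrt_square; lra.
Qed.


Theorem claim1 :
  exists cbar : R, 0 < cbar /\
  forall (d : nat) (f : vec d -> R) (g : vec d -> vec d) (H : vec d -> mat d)
    (rho eps c1 c2 c3 : R) (x gt : vec d) (Bt : mat d) (Dt Dstar : vec d),
    is_gradient f g ->
    is_jacobian g H ->
    0 < rho ->
    hess_lipschitz H rho ->
    0 < eps ->
    c1 <= cbar -> c2 <= cbar ->
    mx_symmetric Bt ->
    CC g H rho eps c1 c2 x gt Bt ->
    0 <= c3 -> c3 < 1 ->
    (forall D : vec d,
       cubic_model_shift f rho x gt Bt Dstar <= cubic_model_shift f rho x gt Bt D) ->
    (vnorm Dstar >= / 2 * sqrt (eps / rho) ->
       cubic_model_shift f rho x gt Bt Dt <=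
       cubic_model_shift f rho x gt Bt Dstar + c3 / 12 * rho * vnorm Dstar ^ 3) ->
    ~ is_eps_SOSP g H rho eps (vadd x Dstar) ->
    cubic_model f rho x gt Bt (vadd x Dt) - cubic_model f rho x gt Bt x
      <= - ((1 - c3) / 96) * sqrt (eps ^ 3 / rho).
Proof.
exists (1/10); split; first lra.
move=> d f g H rho eps c1 c2 c3 x gt B Dt D _ Hj hrho HL heps hc1 hc2 Bsym [CC1 CC2] hc3 hc3' Hmin Hcase NS.
set r := vnorm D.
have hr : 0 <= r := vnorm_ge0 D.
set t := sqrt (eps / rho). set se := sqrt (rho * eps).
have ht : 0 <= t := sqrt_pos _. have hse : 0 <= se := sqrt_pos _.
have [F1 [F2 F3]] := sqrt_facts rho eps hrho heps.
rewrite -/t -/se in F1 F2 F3.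
have Hr : r >= / 2 * t.
{ destruct (Rge_or_lt r (/ 2 * t)) as [|hlt]; first done. exfalso. apply NS. split.
  -
    set V := vsub (vsub (g (vadd x D)) (g x)) (mv (H x) D).
    set G := vadd (vadd gt (mv B D)) (vscale (rho / 2 * r) D).
    have eg : g (vadd x D) = vadd (vadd (vadd (vadd V (vsub (g x) gt)) (vscale (-1) (mv (msub B (H x)) D))) G)
        (vscale (- (rho / 2 * r)) D).
    { apply functional_extensionality => i. rewrite mv_msub /V /G /vadd /vsub /vscale. ring. }
    have hG : vnorm G = 0.
    { have FO := first_order d f rho x gt B D Bsym hrho Hmin G.
      have : dot G G = 0. { rewrite {2}/G !dot_addr dot_scaler (dot_comm G D). rewrite -/r in FO. lra. }
      move=> e; rewrite /vnorm e sqrt_0 //. }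
    rewrite eg.
    have T := taylor_g g H rho Hj HL hrho x D. rewrite -/V -/r in T.
    have N1 := vnorm_add (vadd (vadd (vadd V (vsub (g x) gt)) (vscale (-1) (mv (msub B (H x)) D))) G)
        (vscale (- (rho / 2 * r)) D).
    have N2 := vnorm_add (vadd (vadd V (vsub (g x) gt)) (vscale (-1) (mv (msub B (H x)) D))) G.
    have N3 := vnorm_add (vadd V (vsub (g x) gt)) (vscale (-1) (mv (msub B (H x)) D)).
    have N4 := vnorm_add V (vsub (g x) gt).
    rewrite !vnorm_scale in N1 N3. rewrite Rabs_Ropp in N1. rewrite Rabs_Ropp Rabs_R1 in N3.
    rewrite (Rabs_right (rho / 2 * r)) in N1; last by apply Rle_ge, Rmult_le_pos; lra.
    rewrite vnorm_opp in N4.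
    have C2 := CC2 D. rewrite -/r -/se in C2.
    have hrt : rho * r < se / 2 by rewrite -F2; nra.
    have hrr : rho * r * r <= se / 2 * (/ 2 * t) by apply Rmult_le_compat; nra.
    have hsr : se * r <= se * (/ 2 * t) by apply Rmult_le_compat_l; lra.
    have h0 : 0 <= se * r by apply Rmult_le_pos.
    have := Rmult_le_compat_r _ _ _ h0 hc2.
    have := Rmult_le_compat_r _ _ _ (Rlt_le _ _ heps) hc1.
    have e4 : / 2 * t * se = eps / 2 by rewrite Rmult_assoc F1; field.
    have e5 : se / 2 * (/ 2 * t) = eps / 4 by rewrite -F1; field.
    move=> *. rewrite -/r in N1. lra.
  -
    move=> l [v [hv Ev]].
    have hvv : 0 < dot v v.
    { have := dot_ge0 v. move=> h0. destruct (Rle_lt_or_eq_dec _ _ h0) as [|e]; first done.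
      exfalso; apply hv; apply dot_zero0; lra. }
    have e1 : dot v (mv (H (vadd x D)) v) = l * dot v v by rewrite Ev dot_scaler.
    have e2 : mv (H (vadd x D)) v = vadd (vadd (mv (msub (H (vadd x D)) (H x)) v)
       (vscale (-1) (mv (msub B (H x)) v))) (mv B v).
    { apply functional_extensionality => i. rewrite !mv_msub /vadd /vsub /vscale. ring. }
    rewrite e2 !dot_addr dot_scaler in e1.
    have L1 := dot_lower v (mv (msub (H (vadd x D)) (H x)) v).
    have L2 := CS' v (mv (msub B (H x)) v).
    have L3 := second_order d f rho x gt B D Bsym hrho Hmin v. rewrite -/r in L3.
    have K1 := HL (vadd x D) x v.
    have ex : vsub (vadd x D) x = D by apply functional_extensionality => i; rewrite /vsub /vadd; ring.
    rewrite ex -/r in K1.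
    have K2 := CC2 v. rewrite -/se in K2.
    have hnv := vnorm_ge0 v. have sq := vnorm_sq v.
    have M1 : vnorm v * vnorm (mv (msub (H (vadd x D)) (H x)) v) <= vnorm v * (rho * r * vnorm v) by
      apply Rmult_le_compat_l.
    have M2 : vnorm v * vnorm (mv (msub B (H x)) v) <= vnorm v * (c2 * se * vnorm v) by
      apply Rmult_le_compat_l.
    have hrt : rho * r < se / 2 by rewrite -F2; nra.
    have : l * dot v v >= - (3/2 * rho * r + c2 * se) * dot v v by rewrite /quad in L3; nra.
    move=> h3.
    have : l >= - (3/2 * rho * r + c2 * se).
    { apply Rnot_lt_ge => hl. have : l * dot v v < - (3/2 * rho * r + c2 * se) * dot v v by
        apply Rmult_lt_compat_r. lra. }
    have : c2 * se <= 1/10 * se by nra.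
    move=> *. rewrite -/se. lra. }
have HC := Hcase Hr.
have MV := model_value d f rho x gt B D Bsym hrho Hmin. rewrite -/r in MV HC.
have -> : cubic_model f rho x gt B (vadd x Dt) - cubic_model f rho x gt B x =
   cubic_model_shift f rho x gt B Dt.
{ rewrite /cubic_model_shift /cubic_model /=.
  have -> : vsub x x = vzero by apply functional_extensionality => i; rewrite /vsub /vzero; ring.
  rewrite /quad (dot_comm vzero gt) (dot_comm vzero (mv B vzero)) !dot_vzero vnorm_vzero. ring. }
rewrite F3.
have hr3 : r ^ 3 >= (/ 2 * t) ^ 3.
{ apply Rle_ge, pow_incr; split; [nra|lra]. }
have : rho * r ^ 3 >= rho * (/ 2 * t) ^ 3 by apply Rle_ge, Rmult_le_compat_l; lra.
have e3 : rho * (/ 2 * t) ^ 3 = eps * t / 8.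
{ have -> : rho * (/ 2 * t) ^ 3 = (rho * t) * t * t / 8 by field. rewrite F2.
  have -> : se * t * t / 8 = (t * se) * t / 8 by field. rewrite F1. field. }
rewrite e3. move=> h4.
have : (1 - c3) * (rho * r ^ 3) >= (1 - c3) * (eps * t / 8) by apply Rle_ge, Rmult_le_compat_l; lra.
lra.
Qed.
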